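(* If $\Gamma$ is a simple, undirected, connected graph of order $p\ge 3$, then $\gamma_{[3R]}(\Gamma)\le \frac{7p}{4}$.
   Context: For a graph $\Gamma=(V,E)$ and $h:V\to\{0,1,2,3,4\}$, let $AN(v)=\{w\in N(v):h(w)\ge 1\}$, $AN[v]=AN(v)\cup\{v\}$ and $h(S)=\sum_{u\in S}h(u)$. $h$ is a triple Roman dominating function (3RDF) if every $v$ with $h(v)<3$ satisfies $h(AN[v])\ge|AN(v)|+3$. The triple Roman domination number $\gamma_{[3R]}(\Gamma)$ is the minimum weight $h(V)$ of a 3RDF of $\Gamma$. *)

(* Defs.v *)
From mathcomp Require Import all_boot all_order.
Set Implicit Arguments. Unset Strict Implicit. Unset Printing Implicit Defensive.

Definition simple_graph (T : finType) (e : rel T) : Prop :=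
  symmetric e /\ irreflexive e.

Definition connected_graph (T : finType) (e : rel T) : Prop :=
  forall x y : T, connect e x y.

Section TRD.
Variables (T : finType) (e : rel T).

Definition AN (h : {ffun T -> 'I_5}) (v : T) : {set T} :=
  [set w | e v w & 0 < h w].

Definition weight_on (h : {ffun T -> 'I_5}) (S : {set T}) : nat :=
  \sum_(u in S) (h u : nat).

Definition weight (h : {ffun T -> 'I_5}) : nat := \sum_(u : T) (h u : nat).

Definition is3RDF (h : {ffun T -> 'I_5}) : bool :=
  [forall v, (h v < 3) ==>
     (#|AN h v| + 3 <= weight_on h (v |: AN h v))].

(* gamma_[3R] = minimum weight of a 3RDF; the constant function 4 is always
   a 3RDF (of weight 4|V|), so the default 4|V| never undercuts the minimum. *)
Definition triple_roman_domination_number : nat :=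
  \big[minn/ 4 * #|T|]_(h : {ffun T -> 'I_5} | is3RDF h) weight h.
End TRD.

(* Main.v *)
Require Import Defs.
From mathcomp Require Import all_boot all_order zify.
Set Implicit Arguments. Unset Strict Implicit. Unset Printing Implicit Defensive.

Lemma bigmin_le (I : eqType) (s : seq I) (P : pred I) (F : I -> nat) x i0 :
  i0 \in s -> P i0 -> \big[minn/x]_(i <- s | P i) F i <= F i0.
Proof.
elim: s => // a s IH; rewrite inE big_cons => /orP [/eqP-> ->|/IH H /H].
  by rewrite geq_minl.
by case: (P a) => //; move=> h; rewrite geq_min h orbT.
Qed.

Fixpoint ball (T : finType) (e : rel T) (r : T) (k : nat) : {set T} :=
  if k is k'.+1 then ball e r k' :|: [set v | [exists u in ball e r k', e u v]]
  else [set r].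

Lemma ball_S (T : finType) (e : rel T) r k : ball e r k \subset ball e r k.+1.
Proof. by rewrite /= subsetUl. Qed.

Lemma ball_mono (T : finType) (e : rel T) r m n : m <= n -> ball e r m \subset ball e r n.
Proof.
move=> /subnK <-; elim: (n - m) => [|d IH]; first by rewrite add0n.
by rewrite addSn (subset_trans IH) // ball_S.
Qed.

Lemma ball_step (T : finType) (e : rel T) r k u v :
  u \in ball e r k -> e u v -> v \in ball e r k.+1.
Proof.
move=> hu huv; rewrite /= inE; apply/orP; right; rewrite inE.
by apply/existsP; exists u; rewrite hu.
Qed.

Lemma ball_path (T : finType) (e : rel T) r p : forall x k,
  x \in ball e r k -> path e x p -> last x p \in ball e r (k + size p).
Proof.
elim: p => [|a p IH] x k hx /=; first by rewrite addn0.
move=> /andP [hxa hp]; rewrite addnS -addSn; apply: IH hp.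
exact: ball_step hx hxa.
Qed.

Lemma closed_path (T : finType) (e : rel T) (a : pred T) p :
  (forall u w, a u -> e u w -> a w) -> forall x, a x -> path e x p -> a (last x p).
Proof.
move=> cl; elim: p => [|b p IH] x hx //= /andP [hxb hp].
exact: IH (cl _ _ hx hxb) hp.
Qed.

Lemma dep_exists (T : finType) (e : rel T) r : (forall v, connect e r v) ->
  exists dep : T -> nat, [/\ forall v, (dep v == 0) = (v == r),
    forall v, v != r -> exists u, e u v /\ dep v = (dep u).+1 &
    forall u v, e u v -> dep v <= (dep u).+1].
Proof.
move=> conn.
have ex v : exists n, v \in ball e r n.
  have /connectP [p hp ->] := conn v; exists (0 + size p).
  by apply: ball_path hp; rewrite /= inE.
have dm v n : v \in ball e r n -> ex_minn (ex v) <= n.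
  by case: ex_minnP => m _ H /H.
have din v : v \in ball e r (ex_minn (ex v)) by case: ex_minnP.
exists (fun v => ex_minn (ex v)); split.
- move=> v; apply/eqP/eqP => [H|->].
    by move: (din v); rewrite H /= inE => /eqP.
  by apply/eqP; rewrite -leqn0 dm //= inE.
- move=> v vr; move: (din v) (dm v).
  case E: (ex_minn (ex v)) => [|k] /=.
    by rewrite inE (negbTE vr).
  rewrite inE => /orP [hk|]; first by move=> /(_ k hk); rewrite ltnn.
  rewrite inE => /existsP [u /andP [hu huv]] _; exists u; split => //.
  congr S; apply/eqP; rewrite eqn_leq dm // andbT.
  case: (leqP k (ex_minn (ex u))) => // lt.
  have : v \in ball e r k.
    by apply: (subsetP (ball_mono _ _ lt)); apply: ball_step (din u) huv.
  by move=> /(dm v); rewrite E ltnn.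
- move=> u v huv; apply: dm; exact: ball_step (din u) huv.
Qed.

Lemma root_exists (T : finType) (e : rel T) : symmetric e ->
  (forall x y, connect e x y) -> 3 <= #|T| ->
  exists r w1 w2, [/\ w1 != w2, e r w1 & e r w2].
Proof.
move=> sym conn hT.
have [x _] : exists x : T, true.
  by move: hT; case: (pickP (@predT T)) => [x _|/eq_card0 ->] //; exists x.
have [z zx] : exists z, z != x.
  case: (pickP (fun z => z != x)) => [z hz|H]; first by exists z.
  suff : #|T| <= 1 by move: hT; lia.
  rewrite -(card1 x); apply: subset_leq_card; apply/subsetP => w _.
  by rewrite inE; have := H w => /= /negbFE.
have /connectP [[|y p] /= hp hz] := conn x z; first by rewrite hz eqxx in zx.
case/andP: hp => hxy hp.
case: (pickP (fun w => e x w && (w != y))) => [w /andP [hw wy]|Hx].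
  by exists x, y, w; split => //; rewrite eq_sym.
case: (pickP (fun w => e y w && (w != x))) => [w /andP [hw wx]|Hy].
  by exists y, x, w; split => //; [rewrite eq_sym | rewrite sym].
exfalso.
have cl : forall u w, (u \in [set x; y]) -> e u w -> w \in [set x; y].
  move=> u w; rewrite !inE => /orP [] /eqP -> h.
    by have := Hx w; rewrite /= h /= => /negbFE ->; rewrite orbT.
  by have := Hy w; rewrite /= h /= => /negbFE ->.
have all : forall v, v \in [set x; y].
  move=> v; have /connectP [q hq ->] := conn x v.
  by apply: (closed_path cl) hq; rewrite !inE eqxx.
have : #|T| <= #|[set x; y]|.
  by apply: subset_leq_card; apply/subsetP => v _; exact: all.
have : #|[set x; y]| <= 2 by rewrite cards2; case: (x != y).
move: hT; lia.
Qed.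

Definition lab (b : bool) (j : nat) : nat :=
  if b then nth 0 [:: 4; 0; 3; 0] j else nth 0 [:: 3; 0; 3; 1] j.

Lemma lab_lt5 b j : lab b j < 5.
Proof. by case: b; case: j => [|[|[|[|j]]]] //=; rewrite nth_nil. Qed.

Definition internal (T : finType) (e : rel T) (dep : T -> nat) (v : T) : bool :=
  [exists w, e v w && (dep w == (dep v).+1)].

Definition hs (T : finType) (e : rel T) (dep : T -> nat) (s : nat) : {ffun T -> 'I_5} :=
  [ffun v => inord (lab (internal e dep v) ((dep v + s) %% 4))].

Lemma hsE (T : finType) (e : rel T) dep s v :
  (hs e dep s v : nat) = lab (internal e dep v) ((dep v + s) %% 4).
Proof. by rewrite ffunE inordK // lab_lt5. Qed.

Lemma cond_suff (T : finType) (e : rel T) (h : {ffun T -> 'I_5}) v : irreflexive e ->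
  3 <= h v + \sum_(w in AN e h v) (h w - 1) ->
  #|AN e h v| + 3 <= weight_on h (v |: AN e h v).
Proof.
move=> irr H; rewrite /weight_on big_setU1 /=; last by rewrite inE irr.
have -> : \sum_(w in AN e h v) (h w : nat) = \sum_(w in AN e h v) ((h w - 1) + 1).
  by apply: eq_bigr => w; rewrite inE => /andP [_ hw]; rewrite subnK.
rewrite big_split /= sum1_card; lia.
Qed.

Lemma exc1 (T : finType) (e : rel T) (h : {ffun T -> 'I_5}) v u :
  u \in AN e h v -> h u - 1 <= \sum_(w in AN e h v) (h w - 1).
Proof. by move=> hu; rewrite (bigD1 u) //= leq_addr. Qed.

Lemma exc2 (T : finType) (e : rel T) (h : {ffun T -> 'I_5}) v u1 u2 :
  u1 \in AN e h v -> u2 \in AN e h v -> u1 != u2 ->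
  (h u1 - 1) + (h u2 - 1) <= \sum_(w in AN e h v) (h w - 1).
Proof.
move=> h1 h2 d; rewrite (bigD1 u1) //= (bigD1 u2) /=; last by rewrite h2 eq_sym.
by rewrite addnA leq_addr.
Qed.

Lemma inAN (T : finType) (e : rel T) (h : {ffun T -> 'I_5}) v u :
  e v u -> 0 < h u -> u \in AN e h v.
Proof. by move=> a b; rewrite inE a b. Qed.

Lemma modS4 n : n.+1 %% 4 = (n %% 4).+1 %% 4.
Proof. by rewrite -addn1 -modnDml addn1. Qed.
Lemma modSS4 n : n.+2 %% 4 = (n %% 4).+2 %% 4.
Proof. by rewrite -addn2 -modnDml addn2. Qed.

Lemma hs_3RDF (T : finType) (e : rel T) (dep : T -> nat) r w1 w2 s :
  symmetric e -> irreflexive e -> w1 != w2 -> e r w1 -> e r w2 ->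
  (forall v, (dep v == 0) = (v == r)) ->
  (forall v, v != r -> exists u, e u v /\ dep v = (dep u).+1) ->
  (forall u v, e u v -> dep v <= (dep u).+1) ->
  is3RDF e (hs e dep s).
Proof.
move=> sym irr d12 e1 e2 D0 D1 D2.
set h := hs e dep s.
have hE x : (h x : nat) = lab (internal e dep x) ((dep x + s) %% 4) by rewrite hsE.
apply/forallP => v; apply/implyP => hv; apply: cond_suff => //.
have depr : dep r = 0 by apply/eqP; rewrite D0.
have dw w : e r w -> dep w = 1.
  move=> hw; have := D2 _ _ hw; rewrite depr.
  have : dep w != 0 by rewrite D0; apply/eqP => E; rewrite E irr in hw.
  lia.
have intr : internal e dep r by apply/existsP; exists w1; rewrite e1 dw // depr.
case: (eqVneq v r) hv => [->|vr] hv.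
  move: hv; rewrite hE intr depr add0n => hv.
  have hw3 w : e r w -> 3 <= h w.
    move=> hw; rewrite hE dw // add1n modS4; move: hv.
    have : s %% 4 < 4 by rewrite ltn_mod.
    by case: (s %% 4) => [|[|[|[|k]]]] //= _ _; case: (internal e dep w).
  have H1 := exc2 (inAN (h := h) e1 (leq_trans (isT : 0 < 3) (hw3 _ e1)))
                  (inAN (h := h) e2 (leq_trans (isT : 0 < 3) (hw3 _ e2))) d12.
  have := hw3 _ e1; have := hw3 _ e2; lia.
have [u [euv duv]] := D1 v vr.
have intu : internal e dep u by apply/existsP; exists v; rewrite euv duv eqxx.
have uAN : 0 < h u -> u \in AN e h v by move=> hp; apply: inAN => //; rewrite sym.
have hu : (h u : nat) = lab true ((dep u + s) %% 4) by rewrite hE intu.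
have hvv : (h v : nat) = lab (internal e dep v) (((dep u + s) %% 4).+1 %% 4).
  by rewrite hE duv addSn modS4.
have bl : (dep u + s) %% 4 < 4 by rewrite ltn_mod.
have X1 : 0 < h u -> h u - 1 <= \sum_(w in AN e h v) (h w - 1).
  by move=> p; apply: exc1; apply: uAN.
case Iv: (internal e dep v) hvv => hvv.
  have [w /andP [evw /eqP dvw]] : exists w, e v w && (dep w == (dep v).+1).
    by apply/existsP.
  have wAN : 0 < h w -> w \in AN e h v by move=> hp; apply: inAN.
  have uw : u != w.
    apply/eqP => E; move: dvw; rewrite -E duv => /eqP.
    by rewrite eq_sym -addn2 -{2}(addn0 (dep u)) eqn_add2l.
  have hw : (h w : nat) = lab (internal e dep w) (((dep u + s) %% 4).+2 %% 4).
    by rewrite hE dvw duv !addSn modSS4.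
  have X2 : 0 < h u -> 0 < h w -> (h u - 1) + (h w - 1) <= \sum_(w in AN e h v) (h w - 1).
    by move=> p q; apply: exc2 => //; [apply: uAN | apply: wAN].
  move: bl hu hvv hw; case: ((dep u + s) %% 4) => [|[|[|[|k]]]] //= _ hu hvv hw.
  - rewrite hvv; move: X1; rewrite hu => /(_ isT) H; exact: leq_trans H (leq_addl _ _).
  - by rewrite hvv in hv.
  - rewrite hvv; case: (internal e dep w) hw => /= hw; move: X2; rewrite hu hw => /(_ isT isT) H; exact: leq_trans _ H.
  - by rewrite hvv in hv.
move: bl hu hvv; case: ((dep u + s) %% 4) => [|[|[|[|k]]]] //= _ hu hvv.
- rewrite hvv; move: X1; rewrite hu => /(_ isT) H; exact: leq_trans H (leq_addl _ _).
- by rewrite hvv in hv.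
- by rewrite hvv; move: X1; rewrite hu => /(_ isT) H; rewrite add1n ltnS.
- by rewrite hvv in hv.
Qed.

Lemma lab_sum_mod d b :
  lab b ((d %% 4 + 0) %% 4) + lab b ((d %% 4 + 1) %% 4) +
  lab b ((d %% 4 + 2) %% 4) + lab b ((d %% 4 + 3) %% 4) = 7.
Proof.
have : d %% 4 < 4 by rewrite ltn_mod.
by case: (d %% 4) => [|[|[|[|k]]]] //= _; case: b.
Qed.

Lemma lab_sum d b :
  lab b ((d + 0) %% 4) + lab b ((d + 1) %% 4) +
  lab b ((d + 2) %% 4) + lab b ((d + 3) %% 4) = 7.
Proof. by rewrite -(lab_sum_mod d b) !modnDml. Qed.

Theorem corollary15 (T : finType) (e : rel T) :
  simple_graph e -> connected_graph e -> 3 <= #|T| ->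
  4 * triple_roman_domination_number e <= 7 * #|T|.
Proof.
move=> [sym irr] conn hT.
have [r [w1 [w2 [d12 e1 e2]]]] := root_exists sym conn hT.
have [dep [D0 D1 D2]] := dep_exists (conn r).
have le s : triple_roman_domination_number e <= weight (hs e dep s).
  rewrite /triple_roman_domination_number; apply: bigmin_le.
    by rewrite mem_index_enum.
  exact: (hs_3RDF s sym irr d12 e1 e2 D0 D1 D2).
have sum : weight (hs e dep 0) + weight (hs e dep 1) + weight (hs e dep 2)
           + weight (hs e dep 3) = 7 * #|T|.
  rewrite /weight -!big_split /=.
  rewrite (eq_bigr (fun _ => 7)); last by move=> v _; rewrite !hsE lab_sum.
  by rewrite sum_nat_const mulnC.
have := le 0; have := le 1; have := le 2; have := le 3; lia.
Qed.
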